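(* Let $(\mathfrak g,[\cdot,\cdot],\alpha,\varepsilon)$ be a multiplicative color Hom-Lie algebra and let $\rho_1,\rho_2$ be representations of $\mathfrak g$ on $(M_1,\beta_1)$ and $(M_2,\beta_2)$ respectively. Define $\rho_1\otimes\rho_2:\mathfrak g\to\mathfrak{gl}(M_1\otimes M_2)$ by $(\rho_1\otimes\rho_2)(x)(m_1\otimes m_2)=\rho_1(x)(m_1)\otimes\beta_2(m_2)+\varepsilon(x,m_1)\,\beta_1(m_1)\otimes\rho_2(x)(m_2)$ for homogeneous $x,m_1,m_2$. Then $\rho_1\otimes\rho_2$ is a representation of $\mathfrak g$ on $(M_1\otimes M_2,\beta_1\otimes\beta_2)$.
   Context: $\mathbb K$ is a field of characteristic zero and $\Gamma$ an abelian group. A bicharacter is a map $\varepsilon:\Gamma\times\Gamma\to\mathbb K\setminus\{0\}$ with $\varepsilon(a,b)\varepsilon(b,a)=1$, $\varepsilon(a,b+c)=\varepsilon(a,b)\varepsilon(a,c)$, $\varepsilon(a+b,c)=\varepsilon(a,c)\varepsilon(b,c)$; for homogeneous elements $\varepsilon(x,y)=\varepsilon(\deg x,\deg y)$. A color Hom-Lie algebra $(\mathfrak g,[\cdot,\cdot],\alpha,\varepsilon)$: $\Gamma$-graded space, even bilinear bracket, even linear $\alpha$, with $[x,y]=-\varepsilon(x,y)[y,x]$ and $\varepsilon(z,x)[\alpha(x),[y,z]]+\varepsilon(x,y)[\alpha(y),[z,x]]+\varepsilon(y,z)[\alpha(z),[x,y]]=0$; multiplicative means $\alpha([x,y])=[\alpha(x),\alpha(y)]$.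 A representation of a multiplicative color Hom-Lie algebra $\mathfrak g$ on $(M,\beta)$ ($M$ $\Gamma$-graded, $\beta$ even linear) is an even linear $\rho:\mathfrak g\to\mathfrak{gl}(M)$ with $\rho([x,y])\circ\beta=\rho(\alpha(x))\circ\rho(y)-\varepsilon(x,y)\rho(\alpha(y))\circ\rho(x)$ and $\beta(\rho(x)(m))=\rho(\alpha(x))(\beta(m))$ for all $x\in\mathfrak g$, $m\in M$. $M_1\otimes M_2$ is graded by total degree. *)

(* Defs.v *)
From HB Require Import structures.
From mathcomp Require Import all_boot all_order all_algebra.
Set Implicit Arguments. Unset Strict Implicit. Unset Printing Implicit Defensive.
Import GRing.Theory.
Local Open Scope ring_scope.

Definition is_linear (K : fieldType) (U V : lmodType K) (f : U -> V) : Prop :=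
  forall (c : K) (u v : U), f (c *: u + v) = c *: f u + f v.

Definition is_bilinear (K : fieldType) (U V W : lmodType K) (f : U -> V -> W) : Prop :=
  (forall v, is_linear (fun u => f u v)) /\ (forall u, is_linear (f u)).

(* A Gamma-grading of V: H a v means "v is homogeneous of degree a"
   (v in V_a; 0 lies in every V_a).  The V_a are subspaces and V is
   their (internal) direct sum. *)
Definition is_graded (K : fieldType) (Gamma : zmodType) (V : lmodType K)
    (H : Gamma -> V -> Prop) : Prop :=
  (forall a, H a 0) /\
  (forall a (c : K) u v, H a u -> H a v -> H a (c *: u + v)) /\
  (forall v : V, exists s : seq (Gamma * V),
      uniq (map fst s) /\ (forall p, p \in s -> H p.1 p.2) /\
      v = \sum_(p <- s) p.2) /\
  (forall s : seq (Gamma * V),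
      uniq (map fst s) -> (forall p, p \in s -> H p.1 p.2) ->
      \sum_(p <- s) p.2 = 0 -> forall p, p \in s -> p.2 = 0).

Definition is_even (K : fieldType) (Gamma : zmodType) (U V : lmodType K)
    (HU : Gamma -> U -> Prop) (HV : Gamma -> V -> Prop) (f : U -> V) : Prop :=
  forall a u, HU a u -> HV a (f u).

Definition is_even2 (K : fieldType) (Gamma : zmodType) (U V W : lmodType K)
    (HU : Gamma -> U -> Prop) (HV : Gamma -> V -> Prop) (HW : Gamma -> W -> Prop)
    (f : U -> V -> W) : Prop :=
  forall a b u v, HU a u -> HV b v -> HW (a + b) (f u v).

Definition bicharacter (K : fieldType) (Gamma : zmodType) (eps : Gamma -> Gamma -> K) : Prop :=
  (forall a b, eps a b != 0) /\
  (forall a b, eps a b * eps b a = 1) /\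
  (forall a b c, eps a (b + c) = eps a b * eps a c) /\
  (forall a b c, eps (a + b) c = eps a c * eps b c).

Definition color_hom_lie (K : fieldType) (Gamma : zmodType) (eps : Gamma -> Gamma -> K)
    (g : lmodType K) (Hg : Gamma -> g -> Prop) (br : g -> g -> g) (alpha : g -> g) : Prop :=
  is_graded Hg /\ is_bilinear br /\ is_even2 Hg Hg Hg br /\
  is_linear alpha /\ is_even Hg Hg alpha /\
  (forall a b x y, Hg a x -> Hg b y -> br x y = - (eps a b *: br y x)) /\
  (forall a b c x y z, Hg a x -> Hg b y -> Hg c z ->
     eps c a *: br (alpha x) (br y z) + eps a b *: br (alpha y) (br z x)
     + eps b c *: br (alpha z) (br x y) = 0).

Definition hom_multiplicative (K : fieldType) (g : lmodType K) (br : g -> g -> g) (alpha : g -> g) : Prop :=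
  forall x y, alpha (br x y) = br (alpha x) (alpha y).

Definition is_rep (K : fieldType) (Gamma : zmodType) (eps : Gamma -> Gamma -> K)
    (g : lmodType K) (Hg : Gamma -> g -> Prop) (br : g -> g -> g) (alpha : g -> g)
    (M : lmodType K) (HM : Gamma -> M -> Prop) (beta : M -> M) (rho : g -> M -> M) : Prop :=
  is_graded HM /\ is_linear beta /\ is_even HM HM beta /\
  (forall x, is_linear (rho x)) /\
  (forall (c : K) x y m, rho (c *: x + y) m = c *: rho x m + rho y m) /\
  (forall a b x m, Hg a x -> HM b m -> HM (a + b) (rho x m)) /\
  (forall a b x y m, Hg a x -> Hg b y ->
     rho (br x y) (beta m) = rho (alpha x) (rho y m) - eps a b *: rho (alpha y) (rho x m)) /\
  (forall x m, beta (rho x m) = rho (alpha x) (beta m)).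

(* (T, HT, tens) is the tensor product M1 (x) M2 of graded spaces, graded by
   total degree: tens is the universal bilinear map, and tens(M1_a, M2_b)
   lies in T_(a+b). *)
Definition is_tensor_product (K : fieldType) (Gamma : zmodType)
    (M1 : lmodType K) (H1 : Gamma -> M1 -> Prop)
    (M2 : lmodType K) (H2 : Gamma -> M2 -> Prop)
    (T : lmodType K) (HT : Gamma -> T -> Prop) (tens : M1 -> M2 -> T) : Prop :=
  is_graded HT /\ is_bilinear tens /\ is_even2 H1 H2 HT tens /\
  (forall (W : lmodType K) (f : M1 -> M2 -> W), is_bilinear f ->
     exists h : T -> W, is_linear h /\ (forall m1 m2, h (tens m1 m2) = f m1 m2) /\
       (forall h' : T -> W, is_linear h' -> (forall m1 m2, h' (tens m1 m2) = f m1 m2) ->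
          forall t, h' t = h t)).

Definition is_tensor_map (K : fieldType) (M1 M2 T : lmodType K) (tens : M1 -> M2 -> T)
    (beta1 : M1 -> M1) (beta2 : M2 -> M2) (B : T -> T) : Prop :=
  is_linear B /\ forall m1 m2, B (tens m1 m2) = tens (beta1 m1) (beta2 m2).

Definition is_tensor_rep (K : fieldType) (Gamma : zmodType) (eps : Gamma -> Gamma -> K)
    (g : lmodType K) (Hg : Gamma -> g -> Prop)
    (M1 : lmodType K) (H1 : Gamma -> M1 -> Prop) (beta1 : M1 -> M1) (rho1 : g -> M1 -> M1)
    (M2 : lmodType K) (H2 : Gamma -> M2 -> Prop) (beta2 : M2 -> M2) (rho2 : g -> M2 -> M2)
    (T : lmodType K) (tens : M1 -> M2 -> T) (R : g -> T -> T) : Prop :=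
  (forall x, is_linear (R x)) /\
  (forall (c : K) x y t, R (c *: x + y) t = c *: R x t + R y t) /\
  (forall a b d x m1 m2, Hg a x -> H1 b m1 -> H2 d m2 ->
     R x (tens m1 m2) = tens (rho1 x m1) (beta2 m2) + eps a b *: tens (beta1 m1) (rho2 x m2)).

(* Main.v *)
Set Warnings "-all".
Require Import Defs.
From HB Require Import structures.
From mathcomp Require Import all_boot all_order all_algebra.
From Stdlib Require Import ClassicalEpsilon.
Set Implicit Arguments. Unset Strict Implicit. Unset Printing Implicit Defensive.
Import GRing.Theory.
Local Open Scope ring_scope.

Lemma lin0 (K : fieldType) (U V : lmodType K) (f : U -> V) : is_linear f -> f 0 = 0.
Proof. move=> Hf; have := Hf (-1) 0 0; by rewrite scaler0 addr0 scaleN1r addNr. Qed.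

Lemma linD (K : fieldType) (U V : lmodType K) (f : U -> V) : is_linear f ->
  forall u v, f (u + v) = f u + f v.
Proof. move=> Hf u v; have := Hf 1 u v; by rewrite !scale1r. Qed.

Lemma linZ (K : fieldType) (U V : lmodType K) (f : U -> V) : is_linear f ->
  forall c u, f (c *: u) = c *: f u.
Proof. move=> Hf c u; have := Hf c u 0; by rewrite !addr0 (lin0 Hf) addr0. Qed.

Lemma linN (K : fieldType) (U V : lmodType K) (f : U -> V) : is_linear f ->
  forall u, f (- u) = - f u.
Proof. move=> Hf u; by rewrite -scaleN1r (linZ Hf) scaleN1r. Qed.

Lemma linB (K : fieldType) (U V : lmodType K) (f : U -> V) : is_linear f ->
  forall u v, f (u - v) = f u - f v.
Proof. move=> Hf u v; by rewrite (linD Hf) (linN Hf). Qed.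

Lemma lin_sum (K : fieldType) (U V : lmodType K) (f : U -> V) (I : Type) (r : seq I)
  (P : pred I) (F : I -> U) : is_linear f ->
  f (\sum_(i <- r | P i) F i) = \sum_(i <- r | P i) f (F i).
Proof. move=> Hf; exact: (big_morph f (linD Hf) (lin0 Hf)). Qed.

Definition homs (K : fieldType) (Gamma : zmodType) (V : lmodType K)
  (H : Gamma -> V -> Prop) (s : seq (Gamma * V)) := forall p, p \in s -> H p.1 p.2.

Lemma H_sum (K : fieldType) (Gamma : zmodType) (V : lmodType K)
  (H : Gamma -> V -> Prop) (I : Type) (r : seq I) (P : pred I) (F : I -> V) b :
  is_graded H -> (forall i, P i -> H b (F i)) -> H b (\sum_(i <- r | P i) F i).
Proof.
move=> [H0 [HL _]] HF; apply: big_ind => //.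
  by move=> u v Hu Hv; rewrite -[u]scale1r; apply: HL.
Qed.

Lemma H_scale (K : fieldType) (Gamma : zmodType) (V : lmodType K)
  (H : Gamma -> V -> Prop) b c v : is_graded H -> H b v -> H b (c *: v).
Proof. move=> [H0 [HL _]] Hv; rewrite -[_ *: _]addr0; exact: HL. Qed.

Lemma H_add (K : fieldType) (Gamma : zmodType) (V : lmodType K)
  (H : Gamma -> V -> Prop) b u v : is_graded H -> H b u -> H b v -> H b (u + v).
Proof. move=> [H0 [HL _]] Hu Hv; rewrite -[u]scale1r; exact: HL. Qed.

Lemma sum_partition (Gamma : zmodType) (V : zmodType) (s : seq (Gamma * V)) (ks : seq Gamma) :
  uniq ks -> {subset map fst s <= ks} ->
  \sum_(k <- ks) \sum_(p <- s | p.1 == k) p.2 = \sum_(p <- s) p.2.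
Proof.
move=> Uks Sub.
under eq_bigr => k _ do rewrite big_mkcond.
rewrite exchange_big /=; apply: eq_big_seq => p ps.
rewrite (bigD1_seq p.1) //=; last by apply: Sub; exact: map_f.
rewrite eqxx big1 ?addr0 // => k /negPf; by rewrite eq_sym => ->.
Qed.

Lemma H_sum_seq (K : fieldType) (Gamma : zmodType) (V : lmodType K)
  (H : Gamma -> V -> Prop) (s : seq (Gamma * V)) b :
  is_graded H -> homs H s -> H b (\sum_(p <- s | p.1 == b) p.2).
Proof.
move=> HG Hs; rewrite big_seq_cond; apply: H_sum => // p /andP [ps /eqP <-].
exact: Hs.
Qed.

Lemma filt_unique (K : fieldType) (Gamma : zmodType) (V : lmodType K)
  (H : Gamma -> V -> Prop) (s s' : seq (Gamma * V)) :
  is_graded H -> homs H s -> homs H s' -> \sum_(p <- s) p.2 = \sum_(p <- s') p.2 ->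
  forall b, \sum_(p <- s | p.1 == b) p.2 = \sum_(p <- s' | p.1 == b) p.2.
Proof.
move=> HG Hs Hs' Hsum b.
set ks := undup (map fst s ++ map fst s').
pose D k := \sum_(p <- s | p.1 == k) p.2 - \sum_(p <- s' | p.1 == k) p.2.
pose l := map (fun k => (k, D k)) ks.
have Ul : uniq (map fst l) by rewrite /l -map_comp map_id undup_uniq.
have Hl : homs H l.
  move=> p /mapP [k _ ->] /=; apply: H_add => //; first exact: H_sum_seq.
  rewrite -scaleN1r; apply: H_scale => //; exact: H_sum_seq.
have S0 : \sum_(p <- l) p.2 = 0.
  rewrite big_map /= /D sumrB !sum_partition ?Hsum ?subrr ?undup_uniq //.
    by move=> k kin; rewrite mem_undup mem_cat kin orbT.
  by move=> k kin; rewrite mem_undup mem_cat kin.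
have [bin|bnin] := boolP (b \in ks).
  have := (proj2 (proj2 (proj2 HG))) l Ul Hl S0 (b, D b).
  rewrite /l (map_f (fun k => (k, D k)) bin) => /(_ isT) /= /eqP.
  by rewrite /D subr_eq0 => /eqP.
rewrite !big1_seq // => p /andP [/eqP pb ps]; exfalso; move: bnin;
  rewrite mem_undup mem_cat -pb (map_f fst ps) ?orbT //.
Qed.

Definition dec (K : fieldType) (Gamma : zmodType) (V : lmodType K)
  (H : Gamma -> V -> Prop) (HG : is_graded H) (v : V) : seq (Gamma * V) :=
  proj1_sig (constructive_indefinite_description _ ((proj1 (proj2 (proj2 HG))) v)).

Lemma decP (K : fieldType) (Gamma : zmodType) (V : lmodType K)
  (H : Gamma -> V -> Prop) (HG : is_graded H) (v : V) :
  homs H (dec HG v) /\ v = \sum_(p <- dec HG v) p.2.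
Proof.
rewrite /dec; case: constructive_indefinite_description => s [_ [Hs E]] /=.
by split.
Qed.

Definition comp (K : fieldType) (Gamma : zmodType) (V : lmodType K)
  (H : Gamma -> V -> Prop) (HG : is_graded H) (b : Gamma) (v : V) : V :=
  \sum_(p <- dec HG v | p.1 == b) p.2.

Lemma compE (K : fieldType) (Gamma : zmodType) (V : lmodType K)
  (H : Gamma -> V -> Prop) (HG : is_graded H) (s : seq (Gamma * V)) b :
  homs H s -> comp HG b (\sum_(p <- s) p.2) = \sum_(p <- s | p.1 == b) p.2.
Proof.
move=> Hs; rewrite /comp; case: (decP HG (\sum_(p <- s) p.2)) => Hd Ed.
exact: (filt_unique HG Hd Hs (esym Ed)).
Qed.

Lemma comp_lin (K : fieldType) (Gamma : zmodType) (V : lmodType K)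
  (H : Gamma -> V -> Prop) (HG : is_graded H) b : is_linear (comp HG b).
Proof.
move=> c u v.
case: (decP HG u) => Hu Eu; case: (decP HG v) => Hv Ev.
pose s := map (fun p => (p.1, c *: p.2)) (dec HG u) ++ dec HG v.
have Hs : homs H s.
  move=> p; rewrite mem_cat => /orP [/mapP [q qin ->]|pin] /=; last exact: Hv.
  apply: H_scale => //; exact: Hu.
have Es : c *: u + v = \sum_(p <- s) p.2.
  by rewrite big_cat big_map /= -scaler_sumr -Eu -Ev.
rewrite Es compE // big_cat big_map /= -scaler_sumr.
by rewrite /comp.
Qed.

Lemma comp_hom (K : fieldType) (Gamma : zmodType) (V : lmodType K)
  (H : Gamma -> V -> Prop) (HG : is_graded H) a b v :
  H a v -> comp HG b v = if a == b then v else 0.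
Proof.
move=> Hv; have := @compE _ _ _ _ HG [:: (a, v)] b.
rewrite !big_cons !big_nil /= addr0 => ->; first by case: (a == b); rewrite ?addr0.
by move=> p; rewrite inE => /eqP ->.
Qed.

Lemma comp_H (K : fieldType) (Gamma : zmodType) (V : lmodType K)
  (H : Gamma -> V -> Prop) (HG : is_graded H) b v : H b (comp HG b v).
Proof. apply: H_sum_seq => //; exact: (proj1 (decP HG v)). Qed.

Lemma lin_comp (K : fieldType) (U V W : lmodType K) (f : U -> V) (g : V -> W) :
  is_linear f -> is_linear g -> is_linear (fun u => g (f u)).
Proof. by move=> Hf Hg c u v; rewrite Hf Hg. Qed.

Lemma ext_tens (K : fieldType) (Gamma : zmodType)
    (M1 : lmodType K) (H1 : Gamma -> M1 -> Prop)
    (M2 : lmodType K) (H2 : Gamma -> M2 -> Prop)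
    (T : lmodType K) (HT : Gamma -> T -> Prop) (tens : M1 -> M2 -> T)
    (W : lmodType K) (L1 L2 : T -> W) :
  is_graded H1 -> is_graded H2 -> is_tensor_product H1 H2 HT tens ->
  is_linear L1 -> is_linear L2 ->
  (forall a b u v, H1 a u -> H2 b v -> L1 (tens u v) = L2 (tens u v)) ->
  forall t, L1 t = L2 t.
Proof.
move=> HG1 HG2 [_ [[bl br] [_ univ]]] Hl1 Hl2 Hhom.
have E : forall m1 m2, L1 (tens m1 m2) = L2 (tens m1 m2).
  move=> m1 m2; case: (decP HG1 m1) => Hs1 ->; case: (decP HG2 m2) => Hs2 ->.
  rewrite (lin_sum _ _ _ (bl _)).
  under eq_bigr => p _ do rewrite (lin_sum _ _ _ (br _)).
  rewrite !(lin_sum _ _ _ Hl1) !(lin_sum _ _ _ Hl2).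
  apply: eq_big_seq => p pin; rewrite !(lin_sum _ _ _ Hl1) !(lin_sum _ _ _ Hl2).
  apply: eq_big_seq => q qin; exact: (Hhom _ _ _ _ (Hs1 p pin) (Hs2 q qin)).
have [|h [hl [hE huniq]]] := univ W (fun m1 m2 => L1 (tens m1 m2)).
  split=> [v|u]; first exact: (lin_comp (bl v) Hl1).
  exact: (lin_comp (br u) Hl1).
move=> t; rewrite (huniq L1) // (huniq L2) //.
Qed.
Lemma grp (V : zmodType) (P1 P2 Q1 Q2 X1 X2 X1' X2' Q1' Q2' : V) : X1 = X1' -> X2 = X2' ->
  Q1 = Q1' -> Q2 = Q2' ->
  P1 - P2 + (Q1 - Q2) = P1 + X1 + (X2 + Q1') - (P2 + X2' + (X1' + Q2')).
Proof.
move=> -> -> -> ->.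
rewrite !opprD !addrA; congr (_ - _).
rewrite (addrAC _ X2' Q1') (addrAC _ X2' (- P2)) addrK.
rewrite (addrAC P1 X1' Q1') (addrAC _ X1' (- P2)) addrK.
by rewrite addrAC.
Qed.
Lemma alg (K:fieldType)(T:lmodType K) (P1 P2 Q1 Q2 X1 X2 : T) (eab eba eac ebc eabc eabc' ebac : K) :
 eab*eba = 1 -> eabc = eac*ebc -> eabc' = eab*eac -> ebac = eba*ebc ->
 P1 - eab*:P2 + eabc *: (Q1 - eab *: Q2) = P1 + eabc' *: X1 + ebc *: (X2 + eac *: Q1) - eab *: (P2 + ebac *: X2 + eac *: (X1 + ebc *: Q2)).
Proof.
move=> h1 h2 h3 h4.
rewrite scalerBr !scalerDr !scalerA; apply: grp.
- by rewrite h3.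
- by rewrite h4 mulrA h1 mul1r.
- by rewrite h2 mulrC.
- by rewrite h2 mulrC mulrA.
Qed.

Lemma lin_subZ (K : fieldType) (U V : lmodType K) (f g : U -> V) (e : K) :
  is_linear f -> is_linear g -> is_linear (fun u => f u - e *: g u).
Proof.
move=> Hf Hg c u v; rewrite Hf Hg scalerDr !scalerA mulrC -scalerA.
by rewrite opprD addrACA -scalerBr.
Qed.

Theorem mainTheorem12 (K : fieldType) (Gamma : zmodType) (eps : Gamma -> Gamma -> K)
    (g : lmodType K) (Hg : Gamma -> g -> Prop) (br : g -> g -> g) (alpha : g -> g)
    (M1 : lmodType K) (H1 : Gamma -> M1 -> Prop) (beta1 : M1 -> M1) (rho1 : g -> M1 -> M1)
    (M2 : lmodType K) (H2 : Gamma -> M2 -> Prop) (beta2 : M2 -> M2) (rho2 : g -> M2 -> M2)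
    (T : lmodType K) (HT : Gamma -> T -> Prop) (tens : M1 -> M2 -> T)
    (B : T -> T) (R : g -> T -> T) :
  [pchar K] =i pred0 ->
  bicharacter eps ->
  color_hom_lie eps Hg br alpha ->
  hom_multiplicative br alpha ->
  is_rep eps Hg br alpha H1 beta1 rho1 ->
  is_rep eps Hg br alpha H2 beta2 rho2 ->
  is_tensor_product H1 H2 HT tens ->
  is_tensor_map tens beta1 beta2 B ->
  is_tensor_rep eps Hg H1 beta1 rho1 H2 beta2 rho2 tens R ->
  is_rep eps Hg br alpha HT B R.
Proof.
move=> _ [_ [e1 [eDr eDl]]] [HGg [_ [brev [alin [alev _]]]]] _
  [HG1 [b1lin [b1ev [r1lin [r1x [r1ev [r1id r1b]]]]]]]
  [HG2 [b2lin [b2ev [r2lin [r2x [r2ev [r2id r2b]]]]]]]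
  TP [Blin BE] [Rlin [Rx RE]].
have TP' := TP; move: TP' => [HGT [[tl tr] [tev _]]].
have ext := ext_tens HG1 HG2 TP.
have lx : forall t, is_linear (fun x => R x t).
  by move=> t c x y; rewrite Rx.
split; first exact: HGT.
split; first exact: Blin.
split.
  move=> b t Ht.
  have C : forall t, comp HGT b (B t) = B (comp HGT b t).
    apply: ext; [exact: (lin_comp Blin (comp_lin HGT b))|
                 exact: (lin_comp (comp_lin HGT b) Blin)|].
    move=> a1 a2 u v Hu Hv.
    rewrite BE (comp_hom HGT b (tev _ _ _ _ (b1ev _ _ Hu) (b2ev _ _ Hv))).
    rewrite (comp_hom HGT b (tev _ _ _ _ Hu Hv)).
    by case: (a1 + a2 == b); rewrite ?BE ?(lin0 Blin).
  have E := comp_hom HGT b Ht; rewrite eqxx in E; rewrite -E -C; exact: comp_H.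
split; first exact: Rlin.
split; first exact: Rx.
split.
  move=> a b x t Hx Ht.
  have C : forall t, comp HGT (a + b) (R x t) = R x (comp HGT b t).
    apply: ext; [exact: (lin_comp (Rlin x) (comp_lin HGT (a + b)))|
                 exact: (lin_comp (comp_lin HGT b) (Rlin x))|].
    move=> c d u v Hu Hv.
    have HR : HT (a + (c + d)) (R x (tens u v)).
      rewrite (RE a c d x u v Hx Hu Hv); apply: H_add => //.
        rewrite addrA; exact: tev (r1ev _ _ _ _ Hx Hu) (b2ev _ _ Hv).
      apply: H_scale => //; rewrite addrCA; exact: tev (b1ev _ _ Hu) (r2ev _ _ _ _ Hx Hv).
    rewrite (comp_hom HGT (a + b) HR) (comp_hom HGT b (tev _ _ _ _ Hu Hv)).
    by rewrite (inj_eq (addrI a)); case: (c + d == b); rewrite ?(lin0 (Rlin x)).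
  have E := comp_hom HGT b Ht; rewrite eqxx in E; rewrite -E -C; exact: comp_H.
split.
  move=> a b x y t Hx Hy.
  move: t; apply: ext.
  - exact: (lin_comp Blin (Rlin _)).
  - apply: lin_subZ; [exact: (lin_comp (Rlin y) (Rlin _))|exact: (lin_comp (Rlin x) (Rlin _))].
  move=> c d u v Hu Hv.
  have Hax := alev _ _ Hx; have Hay := alev _ _ Hy.
  rewrite BE (RE (a + b) c d _ _ _ (brev _ _ _ _ Hx Hy) (b1ev _ _ Hu) (b2ev _ _ Hv)).
  rewrite (r1id a b x y _ Hx Hy) (r2id a b x y _ Hx Hy).
  rewrite (RE b c d y u v Hy Hu Hv) (RE a c d x u v Hx Hu Hv).
  rewrite !(linD (Rlin _)) !(linZ (Rlin _)).
  rewrite (RE a (b + c) d _ _ _ Hax (r1ev _ _ _ _ Hy Hu) (b2ev _ _ Hv)).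
  rewrite (RE a c (b + d) _ _ _ Hax (b1ev _ _ Hu) (r2ev _ _ _ _ Hy Hv)).
  rewrite (RE b (a + c) d _ _ _ Hay (r1ev _ _ _ _ Hx Hu) (b2ev _ _ Hv)).
  rewrite (RE b c (a + d) _ _ _ Hay (b1ev _ _ Hu) (r2ev _ _ _ _ Hx Hv)).
  rewrite !r1b !r2b.
  rewrite (linB (tl _)) (linZ (tl _)) (linB (tr _)) (linZ (tr _)).
  apply: alg.
  - exact: e1.
  - exact: eDl.
  - exact: eDr.
  - exact: eDr.
move=> x t.
case: (decP HGg x) => Hs ->.
rewrite (lin_sum _ _ _ (lx t)) (lin_sum _ _ _ alin) (lin_sum _ _ _ (lx (B t))).
rewrite (lin_sum _ _ _ Blin); apply: eq_big_seq => p pin.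
have Hp := Hs p pin; move: t; apply: ext.
- exact: (lin_comp (Rlin _) Blin).
- exact: (lin_comp Blin (Rlin _)).
move=> c d u v Hu Hv.
rewrite (RE _ c d _ _ _ Hp Hu Hv) (linD Blin) (linZ Blin) !BE !r1b !r2b.
by rewrite (RE _ c d _ _ _ (alev _ _ Hp) (b1ev _ _ Hu) (b2ev _ _ Hv)).
Qed.
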